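(* Let $G=(V,E)$ be a finite simple graph with $n$ vertices, $e$ edges, minimum degree $\delta \geq 1$, maximum degree $\Delta$, and independence number $\beta$. Then each of the following five inequalities holds, and in each of them equality holds if and only if $G$ is a regular balanced bipartite graph: [1] $$Z_1(G) \leq (n - \beta) \Delta^2 + \frac{e^2}{2 \beta} + \frac{\beta \Delta^3}{2 \delta};$$ [2] $$F(G) \geq (n - \beta) \delta^3 + \frac{\delta (2 \beta^2 \delta^2 - e^2)}{\beta};$$ [3] $$F(G) \geq (n - \beta) \delta^3 + \frac{\delta}{\beta} \left( 2 \beta \left(\beta \delta^2 + \frac{e^2}{n - \beta}\right) - e^2 - 2 \beta (n - \beta) \Delta^2\right);$$ [4] $$Inv(G) \geq \frac{n - \beta}{\Delta} + \frac{2 \beta^2 \delta^2 - e^2}{\beta \Delta^3};$$ [5] $$Inv(G) \geq \frac{n - \beta}{\Delta} + \frac{1}{\beta \Delta^3} \left( 2 \beta \left(\beta \delta^2 + \frac{e^2}{n - \beta}\right) - e^2 - 2 \beta (n - \beta) \Delta^2\right).$$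
   Context: Graphs are finite, undirected, without loops or multiple edges. $d(u)$ denotes the degree of vertex $u$; $\delta$ and $\Delta$ are the minimum and maximum degrees. The independence number $\beta$ is the maximum size of a set of pairwise nonadjacent vertices. The first Zagreb index is $Z_1(G)=\sum_{u\in V} d(u)^2$, the forgotten topological index is $F(G)=\sum_{u\in V} d(u)^3$, and (when $\delta\ge 1$) the inverse degree is $Inv(G)=\sum_{u\in V}\frac{1}{d(u)}$. A regular balanced bipartite graph is a bipartite graph whose two parts have equal size and in which all vertices have the same degree. *)

(* Defs.v *)
From HB Require Import structures.
From mathcomp Require Import all_boot all_order all_algebra.
Set Implicit Arguments. Unset Strict Implicit. Unset Printing Implicit Defensive.
Import Order.TTheory GRing.Theory Num.Theory.

Section Graph.
Variables (T : finType) (e : rel T).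

Definition simple_graph : Prop := symmetric e /\ irreflexive e.

Definition deg (u : T) : nat := #|[set v | e u v]|.

Definition nverts : nat := #|T|.

Definition edges : {set {set T}} :=
  [set E : {set T} | [exists x : T, exists y : T, e x y && (E == [set x; y])]].
Definition nedges : nat := #|edges|.

(* minimum degree (the default value #|T| only matters for the empty graph,
   where it gives 0) and maximum degree *)
Definition mindeg : nat := \big[minn/#|T|]_(u : T) deg u.
Definition maxdeg : nat := \max_(u : T) deg u.

Definition independent (S : {set T}) : bool :=
  [forall x in S, forall y in S, ~~ e x y].

Definition indep_number : nat := \max_(S : {set T} | independent S) #|S|.

Definition regular : Prop := forall u v : T, deg u = deg v.

Definition balanced_bipartite : Prop :=
  exists A B : {set T},
    [/\ A :&: B = set0, A :|: B = [set: T], #|A| = #|B| &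
        forall x y, e x y -> (x \in A /\ y \in B) \/ (x \in B /\ y \in A)].

Definition regular_balanced_bipartite : Prop :=
  balanced_bipartite /\ regular.

Local Open Scope ring_scope.
Variable R : realFieldType.

Definition zagreb1 : R := \sum_(u : T) ((deg u)%:R) ^+ 2.
Definition forgotten : R := \sum_(u : T) ((deg u)%:R) ^+ 3.
Definition inv_degree : R := \sum_(u : T) ((deg u)%:R)^-1.

End Graph.

(* Main.v *)
Require Import Defs.
From mathcomp Require Import all_boot all_order all_algebra.
From mathcomp Require Import zify ring lra.
Import Order.TTheory GRing.Theory Num.Theory.
Local Open Scope ring_scope.

Set Default Proof Using "All".
Section Real.
Variables (R : realFieldType) (I : finType) (P : pred I) (x : I -> R).
Variables (n m d D b : R).
Hypothesis hd1 : 1 <= d.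
Hypothesis hxd : forall u, d <= x u.
Hypothesis hxD : forall u, x u <= D.
Hypothesis hD : exists u0, x u0 = D.
Hypothesis hcS : \sum_(u | P u) 1 = b.
Hypothesis hcC : \sum_(u | ~~ P u) 1 = n - b.
Hypothesis hb : 1 <= b.
Hypothesis hL1 : \sum_(u | P u) x u <= m.
Hypothesis hL2 : m <= \sum_(u | ~~ P u) x u.

Lemma sum_eq (Q : pred I) (F G : I -> R) : (forall i, Q i -> F i <= G i) ->
  \sum_(i | Q i) F i = \sum_(i | Q i) G i -> forall i, Q i -> F i = G i.
Proof.
move=> H E i Qi; apply/eqP; rewrite eq_sym -subr_eq0; apply/eqP.
apply: (psumr_eq0P (P := Q) (F := fun i => G i - F i)) => //.
  by move=> j Qj; rewrite subr_ge0 H.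
by rewrite sumrB E subrr.
Qed.

Lemma sum_le (Q : pred I) (F G : I -> R) : (forall i, Q i -> F i <= G i) ->
  \sum_(i | Q i) F i <= \sum_(i | Q i) G i.
Proof. by move=> H; apply: ler_sum. Qed.

Lemma sum_cst (Q : pred I) (c : R) : \sum_(i | Q i) c = c * \sum_(i | Q i) 1.
Proof. by rewrite mulr_sumr; apply: eq_bigr => i _; rewrite mulr1. Qed.

Lemma split (F : I -> R) : \sum_u F u = \sum_(u | P u) F u + \sum_(u | ~~ P u) F u.
Proof. exact: bigID. Qed.

Lemma d0 : 0 < d. Proof. have := hd1; lra. Qed.
Lemma dD : d <= D. Proof. by case: hD => u <-. Qed.
Lemma D0 : 0 < D. Proof. have := dD; have := d0; lra. Qed.
Lemma b0 : 0 < b. Proof. have := hb; lra. Qed.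
Lemma x0 u : 0 < x u. Proof. have := hxd u; have := d0; lra. Qed.

Lemma mbd : b * d <= m.
Proof.
apply: le_trans hL1; rewrite -hcS mulr_suml.
by apply: sum_le => u _; rewrite mul1r.
Qed.

Lemma mnbD : m <= (n - b) * D.
Proof.
apply: (le_trans hL2); rewrite -hcC mulr_suml.
by apply: sum_le => u _; rewrite mul1r.
Qed.

Lemma nb0 : 0 < n - b.
Proof.
have := mbd; have := mnbD; have := D0; have := d0; have := hb => h1 h2 h3 h4 h5.
have h6 : 0 < (n - b) * D by apply: lt_le_trans h4; apply: lt_le_trans h5; nra.
by rewrite pmulr_lgt0 in h6 => //; exact: D0.
Qed.


Lemma sq_inj (p q : R) : 0 < p -> 0 < q -> p ^+ 2 = q ^+ 2 -> p = q.
Proof. by move=> hp hq /eqP; rewrite eqrXn2 ?ltW // => /eqP. Qed.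
Lemma cb_inj (p q : R) : 0 < p -> 0 < q -> p ^+ 3 = q ^+ 3 -> p = q.
Proof. by move=> hp hq /eqP; rewrite eqrXn2 ?ltW // => /eqP. Qed.
Lemma pos0 (p q : R) : 0 <= p -> 0 <= q -> p + q = 0 -> p = 0 /\ q = 0.
Proof. move=> *; split; lra. Qed.
Lemma divz (p q : R) : q != 0 -> p / q = 0 -> p = 0.
Proof. by move=> hq /eqP; rewrite mulf_eq0 invr_eq0 (negbTE hq) orbF => /eqP. Qed.
Lemma sqz (p : R) : p ^+ 2 = 0 -> p = 0.
Proof. by move/eqP; rewrite sqrf_eq0 => /eqP. Qed.

Lemma case1 : let Z := \sum_u x u ^+ 2 in
  let r := (n - b) * D ^+ 2 + m ^+ 2 / (2 * b) + b * D ^+ 3 / (2 * d) in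
  Z <= r /\ (Z = r -> (forall u, x u = d) /\ m = b * d).
Proof.
move=> Z r.
have hd := d0; have hD0 := D0; have hb0 := b0; have hdD := dD.
have hdn : d != 0 by rewrite gt_eqF.
have hbn : b != 0 by rewrite gt_eqF.
have S3 : \sum_(u | ~~ P u) x u ^+ 2 <= \sum_(u | ~~ P u) D ^+ 2.
  apply: sum_le => u _; have := hxD u; have := x0 u; nra.
have S4 : \sum_(u | ~~ P u) D ^+ 2 = (n - b) * D ^+ 2 by rewrite sum_cst hcC mulrC.
have S1 : \sum_(u | P u) x u ^+ 2 <= \sum_(u | P u) D * x u.
  apply: sum_le => u _; have := hxD u; have := x0 u; nra.
have S2 : \sum_(u | P u) D * x u = D * \sum_(u | P u) x u by rewrite mulr_sumr.
have S5 : D * \sum_(u | P u) x u <= D * m by rewrite ler_pM2l.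
have E1 : m ^+ 2 / (2 * b) + b * D ^+ 3 / (2 * d) - D * m =
  (m - b * D) ^+ 2 / (2 * b) + b * D ^+ 2 * (D - d) / (2 * d).
  by field; rewrite hdn hbn.
have P1 : 0 <= (m - b * D) ^+ 2 / (2 * b).
  by apply: divr_ge0; [exact: sqr_ge0|lra].
have P2 : 0 <= b * D ^+ 2 * (D - d) / (2 * d).
  apply: divr_ge0; last lra.
  apply: mulr_ge0; last lra.
  by apply: mulr_ge0; [lra|exact: sqr_ge0].
have ZE : Z = \sum_(u | P u) x u ^+ 2 + \sum_(u | ~~ P u) x u ^+ 2 by rewrite /Z split.
split; first by rewrite ZE /r; lra.
move=> Hr.
have Q1 : \sum_(u | ~~ P u) x u ^+ 2 = \sum_(u | ~~ P u) D ^+ 2.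
  by move: Hr; rewrite ZE /r; lra.
have Q2 : \sum_(u | P u) x u ^+ 2 = \sum_(u | P u) D * x u.
  by move: Hr; rewrite ZE /r; lra.
have Q3 : (m - b * D) ^+ 2 / (2 * b) + b * D ^+ 2 * (D - d) / (2 * d) = 0.
  by move: Hr; rewrite ZE /r -E1; lra.
have [Q4 Q5] := pos0 _ _ P1 P2 Q3.
have hm : m = b * D.
  by apply/eqP; rewrite -subr_eq0; apply/eqP/sqz/(divz _ _ _ Q4); lra.
have hDd : D = d.
  have H := divz _ _ _ Q5.
  have : b * D ^+ 2 * (D - d) = 0 by apply: H; lra.
  move/eqP; rewrite mulf_eq0 mulf_eq0 (gt_eqF hb0) /= sqrf_eq0 (gt_eqF hD0) /=.
  by rewrite subr_eq0 => /eqP.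
have hx : forall u, x u = D.
  move=> u; case Pu: (P u).
    have H := sum_eq P (fun v => x v ^+ 2) (fun v => D * x v)
      (fun v _ => ltac:(have := hxD v; have := x0 v; nra)) Q2 u Pu.
    have := x0 u; move: H; rewrite /= expr2 => H hx.
    by apply: (mulIf (lt0r_neq0 hx)); rewrite H.
  have Nu : ~~ P u by rewrite Pu.
  have H := sum_eq (fun v => ~~ P v) (fun v => x v ^+ 2) (fun v => D ^+ 2)
      (fun v _ => ltac:(have := hxD v; have := x0 v; nra)) Q1 u Nu.
  exact: sq_inj (x0 u) hD0 H.
by split; [move=> u; rewrite hx hDd|rewrite hm hDd].
Qed.

Lemma prodz (p c : R) : 0 < c -> p * c = 0 -> p = 0.
Proof. by move=> hc /eqP; rewrite mulf_eq0 (gt_eqF hc) orbF => /eqP. Qed.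

Lemma cube_le u : d ^+ 3 <= x u ^+ 3.
Proof. by rewrite lerXn2r // ?nnegrE ?(hxd u) // ltW // ?d0 ?x0. Qed.

Lemma case2 : let F := \sum_u x u ^+ 3 in
  let r := (n - b) * d ^+ 3 + d * (2 * b ^+ 2 * d ^+ 2 - m ^+ 2) / b in
  r <= F /\ (F = r -> (forall u, x u = d) /\ m = b * d).
Proof.
move=> F r.
have hd := d0; have hD0 := D0; have hb0 := b0; have hdD := dD; have hmb := mbd.
have hdn : d != 0 by rewrite gt_eqF.
have hbn : b != 0 by rewrite gt_eqF.
have hbd : 0 < b * d by apply: mulr_gt0.
have S3 : \sum_(u | ~~ P u) d ^+ 3 <= \sum_(u | ~~ P u) x u ^+ 3.
  by apply: sum_le => u _; apply: cube_le.
have S4 : \sum_(u | ~~ P u) d ^+ 3 = (n - b) * d ^+ 3 by rewrite sum_cst hcC mulrC.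
have S1 : \sum_(u | P u) d ^+ 3 <= \sum_(u | P u) x u ^+ 3.
  by apply: sum_le => u _; apply: cube_le.
have S2 : \sum_(u | P u) d ^+ 3 = b * d ^+ 3 by rewrite sum_cst hcS mulrC.
have hc : 0 < d * (m + b * d) / b.
  by apply: divr_gt0 => //; apply: mulr_gt0 => //; lra.
have E1 : (n - b) * d ^+ 3 + b * d ^+ 3 - r = (m - b * d) * (d * (m + b * d) / b).
  by rewrite /r; field.
have P1 : 0 <= (m - b * d) * (d * (m + b * d) / b).
  by apply: mulr_ge0; lra.
have ZE : F = \sum_(u | P u) x u ^+ 3 + \sum_(u | ~~ P u) x u ^+ 3 by rewrite /F split.
split; first by rewrite ZE; lra.
move=> Hr.
have Q1 : \sum_(u | ~~ P u) d ^+ 3 = \sum_(u | ~~ P u) x u ^+ 3 by lra.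
have Q2 : \sum_(u | P u) d ^+ 3 = \sum_(u | P u) x u ^+ 3 by lra.
have Q3 : (m - b * d) * (d * (m + b * d) / b) = 0 by lra.
have hm : m = b * d by apply/eqP; rewrite -subr_eq0; apply/eqP/(prodz _ _ hc Q3).
split => // u; case Pu: (P u).
  have H := sum_eq P (fun v => d ^+ 3) (fun v => x v ^+ 3)
    (fun v _ => cube_le v) Q2 u Pu.
  by apply/esym/cb_inj => //; apply: x0.
have Nu : ~~ P u by rewrite Pu.
have H := sum_eq (fun v => ~~ P v) (fun v => d ^+ 3) (fun v => x v ^+ 3)
    (fun v _ => cube_le v) Q1 u Nu.
by apply/esym/cb_inj => //; apply: x0.
Qed.

Lemma case3 : let F := \sum_u x u ^+ 3 in
  let r := (n - b) * d ^+ 3 + d / b *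
      (2 * b * (b * d ^+ 2 + m ^+ 2 / (n - b)) - m ^+ 2
       - 2 * b * (n - b) * D ^+ 2) in
  r <= F /\ (F = r -> (forall u, x u = d) /\ m = b * d).
Proof.
move=> F r.
have [C1 C2] := case2; rewrite /F; rewrite /= in C1 C2.
have hd := d0; have hD0 := D0; have hb0 := b0; have hnb := nb0; have hmb := mbd.
have hmn := mnbD.
have hdn : d != 0 by rewrite gt_eqF.
have hbn : b != 0 by rewrite gt_eqF.
have hnbn : n - b != 0 by rewrite gt_eqF.
have hc : 0 <= 2 * d * ((n - b) * D + m) / (n - b).
  apply: divr_ge0; last lra.
  apply: mulr_ge0; first lra.
  have : 0 < b * d by apply: mulr_gt0.
  lra.
have E1 : (n - b) * d ^+ 3 + d * (2 * b ^+ 2 * d ^+ 2 - m ^+ 2) / b - r =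
  ((n - b) * D - m) * (2 * d * ((n - b) * D + m) / (n - b)).
  by rewrite /r; field; rewrite hbn hnbn.
have P1 : 0 <= ((n - b) * D - m) * (2 * d * ((n - b) * D + m) / (n - b)).
  by apply: mulr_ge0; lra.
split; first by lra.
by move=> Hr; apply: C2; lra.
Qed.

Lemma inv_le u : D^-1 <= (x u)^-1.
Proof. by rewrite lef_pV2 ?posrE ?D0 ?x0. Qed.

Lemma case4 : let F := \sum_u (x u)^-1 in
  let r := (n - b) / D + (2 * b ^+ 2 * d ^+ 2 - m ^+ 2) / (b * D ^+ 3) in
  r <= F /\ (F = r -> (forall u, x u = d) /\ m = b * d).
Proof.
move=> F r.
have hd := d0; have hD0 := D0; have hb0 := b0; have hdD := dD; have hmb := mbd.
have hDn : D != 0 by rewrite gt_eqF.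
have hbn : b != 0 by rewrite gt_eqF.
have hbd : 0 < b * d by apply: mulr_gt0.
have S3 : \sum_(u | ~~ P u) D^-1 <= \sum_(u | ~~ P u) (x u)^-1.
  by apply: sum_le => u _; apply: inv_le.
have S4 : \sum_(u | ~~ P u) D^-1 = (n - b) / D by rewrite sum_cst hcC mulrC.
have S1 : \sum_(u | P u) D^-1 <= \sum_(u | P u) (x u)^-1.
  by apply: sum_le => u _; apply: inv_le.
have S2 : \sum_(u | P u) D^-1 = b / D by rewrite sum_cst hcS mulrC.
have hc1 : 0 < b * (D + d) / D ^+ 3.
  by apply: divr_gt0; [apply: mulr_gt0; lra|apply: exprn_gt0].
have hc2 : 0 < (m + b * d) / (b * D ^+ 3).
  by apply: divr_gt0; [lra|apply: mulr_gt0 => //; apply: exprn_gt0].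
have E1 : (n - b) / D + b / D - r =
   (D - d) * (b * (D + d) / D ^+ 3) + (m - b * d) * ((m + b * d) / (b * D ^+ 3)).
  by rewrite /r; field; rewrite hDn hbn.
have P1 : 0 <= (D - d) * (b * (D + d) / D ^+ 3) by apply: mulr_ge0; lra.
have P2 : 0 <= (m - b * d) * ((m + b * d) / (b * D ^+ 3)) by apply: mulr_ge0; lra.
have ZE : F = \sum_(u | P u) (x u)^-1 + \sum_(u | ~~ P u) (x u)^-1 by rewrite /F split.
split; first by rewrite ZE; lra.
move=> Hr.
have Q1 : \sum_(u | ~~ P u) D^-1 = \sum_(u | ~~ P u) (x u)^-1 by lra.
have Q2 : \sum_(u | P u) D^-1 = \sum_(u | P u) (x u)^-1 by lra.
have Q3 : (D - d) * (b * (D + d) / D ^+ 3) + (m - b * d) * ((m + b * d) / (b * D ^+ 3)) = 0 by lra.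
have [Q4 Q5] := pos0 _ _ P1 P2 Q3.
have hm : m = b * d by apply/eqP; rewrite -subr_eq0; apply/eqP/(prodz _ _ hc2 Q5).
have hDd : D = d by apply/eqP; rewrite -subr_eq0; apply/eqP/(prodz _ _ hc1 Q4).
split => // u; rewrite -hDd; case Pu: (P u).
  have H := sum_eq P (fun v => D^-1) (fun v => (x v)^-1)
    (fun v _ => inv_le v) Q2 u Pu.
  by apply: invr_inj; rewrite -H.
have Nu : ~~ P u by rewrite Pu.
have H := sum_eq (fun v => ~~ P v) (fun v => D^-1) (fun v => (x v)^-1)
    (fun v _ => inv_le v) Q1 u Nu.
by apply: invr_inj; rewrite -H.
Qed.

Lemma case5 : let F := \sum_u (x u)^-1 in
  let r := (n - b) / D + (b * D ^+ 3)^-1 *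
      (2 * b * (b * d ^+ 2 + m ^+ 2 / (n - b)) - m ^+ 2
       - 2 * b * (n - b) * D ^+ 2) in
  r <= F /\ (F = r -> (forall u, x u = d) /\ m = b * d).
Proof.
move=> F r.
have [C1 C2] := case4; rewrite /F; rewrite /= in C1 C2.
have hd := d0; have hD0 := D0; have hb0 := b0; have hnb := nb0; have hmb := mbd.
have hmn := mnbD.
have hDn : D != 0 by rewrite gt_eqF.
have hbn : b != 0 by rewrite gt_eqF.
have hnbn : n - b != 0 by rewrite gt_eqF.
have hc : 0 <= 2 * ((n - b) * D + m) / ((n - b) * D ^+ 3).
  apply: divr_ge0.
    have : 0 < b * d by apply: mulr_gt0.
    lra.
  by apply: mulr_ge0; [lra|apply: ltW; apply: exprn_gt0].
have E1 : (n - b) / D + (2 * b ^+ 2 * d ^+ 2 - m ^+ 2) / (b * D ^+ 3) - r =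
  ((n - b) * D - m) * (2 * ((n - b) * D + m) / ((n - b) * D ^+ 3)).
  by rewrite /r; field; rewrite hDn hbn hnbn.
have P1 : 0 <= ((n - b) * D - m) * (2 * ((n - b) * D + m) / ((n - b) * D ^+ 3)).
  by apply: mulr_ge0; lra.
split; first by lra.
by move=> Hr; apply: C2; lra.
Qed.

Lemma conv : (forall u, x u = d) -> D = d -> n = 2 * b -> m = b * d ->
  [/\ \sum_u x u ^+ 2 = (n - b) * D ^+ 2 + m ^+ 2 / (2 * b) + b * D ^+ 3 / (2 * d),
      \sum_u x u ^+ 3 = (n - b) * d ^+ 3 + d * (2 * b ^+ 2 * d ^+ 2 - m ^+ 2) / b,
      \sum_u x u ^+ 3 = (n - b) * d ^+ 3 + d / b *
      (2 * b * (b * d ^+ 2 + m ^+ 2 / (n - b)) - m ^+ 2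
       - 2 * b * (n - b) * D ^+ 2),
      \sum_u (x u)^-1 = (n - b) / D + (2 * b ^+ 2 * d ^+ 2 - m ^+ 2) / (b * D ^+ 3)
    & \sum_u (x u)^-1 = (n - b) / D + (b * D ^+ 3)^-1 *
      (2 * b * (b * d ^+ 2 + m ^+ 2 / (n - b)) - m ^+ 2
       - 2 * b * (n - b) * D ^+ 2)].
Proof.
move=> hreg hDd hn hm.
have hd := d0; have hb0 := b0.
have hdn : d != 0 by rewrite gt_eqF.
have hbn : b != 0 by rewrite gt_eqF.
have sc : forall c : R, \sum_(u : I) c = c * n.
  move=> c; rewrite (split (fun _ => c)) sum_cst (sum_cst (fun u => ~~ P u)) hcS hcC; ring.
have E2 : \sum_u x u ^+ 2 = d ^+ 2 * n.
  by rewrite -sc; apply: eq_bigr => u _; rewrite hreg.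
have E3 : \sum_u x u ^+ 3 = d ^+ 3 * n.
  by rewrite -sc; apply: eq_bigr => u _; rewrite hreg.
have Ei : \sum_u (x u)^-1 = d^-1 * n.
  by rewrite -sc; apply: eq_bigr => u _; rewrite hreg.
rewrite E2 E3 Ei hDd hm hn.
split; field; rewrite ?hdn ?hbn //.
- have -> : 2 * b - b = b by ring.
  by rewrite hbn.
- have -> : 2 * b - b = b by ring.
  by rewrite hbn.
Qed.

End Real.
Unset Default Proof Using.
Set Implicit Arguments. Unset Strict Implicit.
Local Close Scope ring_scope.
Section G.
Variables (T : finType) (e : rel T).
Hypothesis Hs : simple_graph e.

Lemma esym x y : e x y = e y x.
Proof. by case: Hs => S _; rewrite S. Qed.
Lemma eirr x : e x x = false.
Proof. by case: Hs => _ I; rewrite I. Qed.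
Lemma eneq x y : e x y -> x != y.
Proof. by apply: contraTneq => ->; rewrite eirr. Qed.

Lemma minle (s : seq T) x F u : u \in s -> (\big[minn/x]_(i <- s) F i <= F u)%N.
Proof.
elim: s => // a s IH; rewrite in_cons big_cons => /orP [/eqP ->|/IH H].
  exact: geq_minl.
exact: leq_trans (geq_minr _ _) H.
Qed.
Lemma minlex (s : seq T) x F : (\big[minn/x]_(i <- s) F i <= x)%N.
Proof.
elim: s => [|a s IH]; first by rewrite big_nil.
by rewrite big_cons; exact: leq_trans (geq_minr _ _) IH.
Qed.

Lemma mindeg_le u : (mindeg e <= deg e u)%N.
Proof. by apply: minle; rewrite mem_index_enum. Qed.
Lemma mindeg_card : (mindeg e <= #|T|)%N.
Proof. exact: minlex. Qed.
Lemma maxdeg_ge u : (deg e u <= maxdeg e)%N.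
Proof. exact: (leq_bigmax u). Qed.

Lemma indep_ge S : independent e S -> (#|S| <= indep_number e)%N.
Proof. by move=> H; apply: (leq_bigmax_cond S H). Qed.

Lemma indep_ex : exists2 S, independent e S & #|S| = indep_number e.
Proof.
have H0 : (0 < #|independent e|)%N.
  apply/card_gt0P; exists set0; rewrite unfold_in /independent.
  by apply/forallP => x; rewrite in_set0.
have [S HS HM] := eq_bigmax_cond (fun S : {set T} => #|S|) H0.
by exists S => //; rewrite /indep_number HM.
Qed.

Lemma indepP S : independent e S -> forall x y, x \in S -> y \in S -> e x y = false.
Proof.
move=> /forallP H x y xS yS; move: (H x); rewrite xS /= => /forallP /(_ y).
by rewrite yS /= => /negbTE.
Qed.

Lemma set2_inj (a b x y : T) : a != b -> [set a; b] = [set x; y] ->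
  (a = x /\ b = y) \/ (a = y /\ b = x).
Proof.
move=> nab E.
have ha : a \in [set x; y] by rewrite -E !inE eqxx.
have hb : b \in [set x; y] by rewrite -E !inE eqxx orbT.
have hx : x \in [set a; b] by rewrite E !inE eqxx.
have hy : y \in [set a; b] by rewrite E !inE eqxx orbT.
move: ha hb hx hy; rewrite !in_set2.
case/orP=> /eqP ax; case/orP=> /eqP bx; subst;
  rewrite ?eqxx ?orbT //= => _ _; try by rewrite eqxx in nab.
- by left.
- by right.
Qed.

Definition arcs (S : {set T}) := [set p : T * T | (p.1 \in S) && e p.1 p.2].
Definition f2 (p : T * T) : {set T} := [set p.1; p.2].

Lemma sum_deg_arcs (S : {set T}) : (\sum_(u in S) deg e u)%N = #|arcs S|.
Proof.
rewrite /deg.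
transitivity (\sum_(u in S) \sum_(v | e u v) 1)%N.
  by apply: eq_bigr => u _; rewrite sum1_card; apply: eq_card => v; rewrite inE.
rewrite pair_big_dep /= sum1_card; apply: eq_card => p; rewrite /arcs inE.
by [].
Qed.

Lemma f2_edges S p : p \in arcs S -> f2 p \in edges e.
Proof.
rewrite inE => /andP [_ H]; rewrite /edges inE.
by apply/existsP; exists p.1; apply/existsP; exists p.2; rewrite H eqxx.
Qed.

Lemma L1 S : independent e S -> (\sum_(u in S) deg e u <= nedges e)%N.
Proof.
move=> HS; rewrite sum_deg_arcs /nedges.
have inj : {in arcs S &, injective f2}.
  case=> a b [x y]; rewrite !inE /= => /andP [aS ab] /andP [xS xy].
  rewrite /f2 => /(set2_inj (eneq ab)) [[-> ->] //|[ay bx]].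
  by move: xy; rewrite /= in ay; rewrite -ay (indepP HS xS aS).
rewrite -(card_in_imset inj); apply: subset_leq_card.
by apply/subsetP => E /imsetP [p pS ->]; apply: f2_edges pS.
Qed.

Lemma L2sub S : independent e S -> edges e \subset f2 @: arcs (~: S).
Proof.
move=> HS; apply/subsetP => E; rewrite inE => /existsP [x /existsP [y /andP [xy /eqP ->]]].
case xS: (x \in S).
  have yS : y \notin S by apply/negP => yS; rewrite (indepP HS xS yS) in xy.
  apply/imsetP; exists (y, x); first by rewrite inE /= inE yS esym.
  by rewrite /f2 /= setUC.
by apply/imsetP; exists (x, y); rewrite // inE /= inE xS.
Qed.

Lemma L2 S : independent e S -> (nedges e <= \sum_(u in ~: S) deg e u)%N.
Proof.
move=> HS; rewrite sum_deg_arcs /nedges.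
apply: leq_trans (leq_imset_card f2 _); apply: subset_leq_card.
exact: L2sub.
Qed.

Lemma L2s S : independent e S -> ~~ independent e (~: S) ->
  (nedges e < \sum_(u in ~: S) deg e u)%N.
Proof.
move=> HS HC; rewrite ltn_neqAle L2 // andbT.
have [x [y [xS yS xy]]] : exists x y, [/\ x \in ~: S, y \in ~: S & e x y].
  move: HC; rewrite /independent => /forallPn [x]; rewrite negb_imply.
  case/andP=> xS /forallPn [y]; rewrite negb_imply negbK => /andP [yS xy].
  by exists x, y.
rewrite sum_deg_arcs; apply/negP => /eqP Heq.
have Hle : (#|arcs (~: S)| <= #|f2 @: arcs (~: S)|)%N.
  rewrite -Heq /nedges; apply: subset_leq_card; exact: L2sub.
have : #|f2 @: arcs (~: S)| == #|arcs (~: S)|.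
  by rewrite eqn_leq Hle leq_imset_card.
move/imset_injP => inj.
have := inj (x, y) (y, x).
rewrite !inE /= -!(in_setC) xS yS xy esym xy /f2 /= setUC => /(_ isT isT erefl).
by case=> E; move: (eneq xy); rewrite E eqxx.
Qed.

Lemma handshake : (\sum_u deg e u = 2 * nedges e)%N.
Proof.
have -> : (\sum_u deg e u = \sum_(u in setT) deg e u)%N.
  by apply: eq_bigl => u; rewrite inE.
rewrite sum_deg_arcs -sum1_card.
rewrite (partition_big f2 (mem (edges e))); last first.
  by move=> p; apply: f2_edges.
rewrite /nedges -sum1_card big_distrr /=; apply: eq_bigr => E.
rewrite inE => /existsP [x /existsP [y /andP [xy /eqP ->]]].
rewrite muln1 (eq_bigl (mem [set (x, y); (y, x)])).
  rewrite sum1_card cards2; suff -> : (x, y) != (y, x) by [].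
  by apply/eqP; case=> E0; move: (eneq xy); rewrite E0 eqxx.
case=> a b; rewrite !inE /= /f2 /=.
apply/idP/idP.
  case/andP=> ab /eqP H; case: (set2_inj (eneq ab) H) => [[-> ->]|[-> ->]].
    by rewrite eqxx.
  by rewrite eqxx orbT.
case/orP=> /eqP [-> ->]; first by rewrite xy eqxx.
by rewrite esym xy setUC eqxx.
Qed.

Lemma nsplit (S : {set T}) (F : T -> nat) :
  (\sum_u F u = \sum_(u in S) F u + \sum_(u in ~: S) F u)%N.
Proof.
rewrite (bigID (fun u => u \in S)) /=; congr (_ + _).
by apply: eq_bigl => u; rewrite inE.
Qed.

Lemma rbb_of (k : nat) : (forall u, deg e u = k) -> (0 < k)%N ->
  nedges e = (indep_number e * k)%N -> regular_balanced_bipartite e.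
Proof.
move=> hk k0 hm.
have [S HS HSc] := indep_ex.
have hsum : forall A : {set T}, (\sum_(u in A) deg e u = #|A| * k)%N.
  by move=> A; rewrite (eq_bigr (fun _ => k)) // sum_nat_const.
have hh := handshake.
rewrite (nsplit S) !hsum HSc -hm in hh.
have hC : (#|~: S| * k = nedges e)%N by move: hh; lia.
have HC : independent e (~: S).
  apply/negPn/negP => HN; have := L2s HS HN.
  by rewrite hsum hC ltnn.
have hcard : #|S| = #|~: S|.
  by apply/eqP; rewrite -(eqn_pmul2r k0) hC HSc hm.
split; last by move=> u v; rewrite !hk.
exists S, (~: S); split => //; first by rewrite setICr.
  by rewrite setUCr.
move=> x y xy; case xS: (x \in S).
  left; split => //; rewrite inE; apply/negP => yS.
  by rewrite (indepP HS xS yS) in xy.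
right; split; first by rewrite inE xS.
apply/negPn/negP => yS.
have xS' : x \in ~: S by rewrite inE xS.
have yS' : y \in ~: S by rewrite inE.
by rewrite (indepP HC xS' yS') in xy.
Qed.

Lemma of_rbb x0 : regular_balanced_bipartite e -> (0 < deg e x0)%N ->
  [/\ forall u, deg e u = deg e x0, #|T| = (2 * indep_number e)%N &
      nedges e = (indep_number e * deg e x0)%N].
Proof.
move=> [[A [B [hI hU hC hE]]] hreg] k0.
set k := deg e x0.
have hk : forall u, deg e u = k by move=> u; apply: hreg.
have hsum : forall A : {set T}, (\sum_(u in A) deg e u = #|A| * k)%N.
  by move=> A'; rewrite (eq_bigr (fun _ => k)) // sum_nat_const.
have hAB : forall u, u \in A -> u \in B -> False.
  move=> u uA uB; have : u \in A :&: B by rewrite inE uA uB.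
  by rewrite hI inE.
have HA : independent e A.
  apply/forallP => x; apply/implyP => xA; apply/forallP => y; apply/implyP => yA.
  apply/negP => xy; case: (hE x y xy) => [[_ yB]|[xB _]].
    exact: hAB yA yB.
  exact: hAB xA xB.
have HB : independent e B.
  apply/forallP => x; apply/implyP => xB; apply/forallP => y; apply/implyP => yB.
  apply/negP => xy; case: (hE x y xy) => [[xA _]|[_ yA]].
    exact: hAB xA xB.
  exact: hAB yA yB.
have hCB : ~: B = A.
  apply/setP => u; rewrite inE.
  have : u \in A :|: B by rewrite hU inE.
  rewrite inE; case uA: (u \in A); case uB: (u \in B) => //= _.
  by case: (hAB u uA uB).
have [S HS HSc] := indep_ex.
have h1 := L1 HS; have h2 := L2 HB; have h3 := L1 HA; have h4 := indep_ge HA.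
rewrite hsum HSc in h1; rewrite hCB hsum in h2; rewrite hsum in h3.
have h5 : (indep_number e * k <= #|A| * k)%N by apply: leq_trans h1 h2.
rewrite leq_pmul2r // in h5.
have hAe : #|A| = indep_number e by apply/eqP; rewrite eqn_leq h4 h5.
split => //.
  have := cardsUI A B; rewrite hU hI cards0 addn0 -hC hAe cardsT => ->.
  by rewrite /=; lia.
by apply/eqP; rewrite eqn_leq h1 -hAe h2.
Qed.


Lemma minge (s : seq T) x F c : (c <= x)%N -> (forall i, c <= F i)%N ->
  (c <= \big[minn/x]_(i <- s) F i)%N.
Proof.
move=> hx hF; elim: s => [|a s IH]; first by rewrite big_nil.
by rewrite big_cons leq_min hF IH.
Qed.

Lemma reg_minmax k (x0 : T) : (forall u, deg e u = k) -> mindeg e = k /\ maxdeg e = k.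
Proof.
move=> hk; split; apply/eqP; rewrite eqn_leq.
  rewrite -{1}(hk x0) mindeg_le /=; apply: minge => [|i]; last by rewrite hk.
  by rewrite -(hk x0); apply: max_card.
rewrite -{2}(hk x0) maxdeg_ge andbT; apply/bigmax_leqP => i _; by rewrite hk.
Qed.

End G.
Local Open Scope ring_scope.
Theorem theorem1 (R : realFieldType) (T : finType) (e : rel T)
  (Hsimple : simple_graph e) (Hdelta : (1 <= mindeg e)%N) :
  let n : R := (nverts T)%:R in
  let m : R := (nedges e)%:R in
  let dl : R := (mindeg e)%:R in
  let Dl : R := (maxdeg e)%:R in
  let b : R := (indep_number e)%:R in
  let rhs1 := (n - b) * Dl ^+ 2 + m ^+ 2 / (2 * b) + b * Dl ^+ 3 / (2 * dl) in
  let rhs2 := (n - b) * dl ^+ 3 + dl * (2 * b ^+ 2 * dl ^+ 2 - m ^+ 2) / b in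
  let rhs3 := (n - b) * dl ^+ 3 + dl / b *
      (2 * b * (b * dl ^+ 2 + m ^+ 2 / (n - b)) - m ^+ 2
       - 2 * b * (n - b) * Dl ^+ 2) in
  let rhs4 := (n - b) / Dl + (2 * b ^+ 2 * dl ^+ 2 - m ^+ 2) / (b * Dl ^+ 3) in
  let rhs5 := (n - b) / Dl + (b * Dl ^+ 3)^-1 *
      (2 * b * (b * dl ^+ 2 + m ^+ 2 / (n - b)) - m ^+ 2
       - 2 * b * (n - b) * Dl ^+ 2) in
  [/\ zagreb1 e R <= rhs1 /\ (zagreb1 e R = rhs1 <-> regular_balanced_bipartite e),
      rhs2 <= forgotten e R /\ (forgotten e R = rhs2 <-> regular_balanced_bipartite e),
      rhs3 <= forgotten e R /\ (forgotten e R = rhs3 <-> regular_balanced_bipartite e),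
      rhs4 <= inv_degree e R /\ (inv_degree e R = rhs4 <-> regular_balanced_bipartite e)
    & rhs5 <= inv_degree e R /\ (inv_degree e R = rhs5 <-> regular_balanced_bipartite e)].
Proof.
move=> n m dl Dl b rhs1 rhs2 rhs3 rhs4 rhs5.
have [S HS HSc] := indep_ex e.
have hT : (0 < #|T|)%N := leq_trans Hdelta (mindeg_card e).
have [x0 _] := card_gt0P hT.
have hb1 : (1 <= indep_number e)%N.
  apply: leq_trans (indep_ge (S := [set x0]) _); first by rewrite cards1.
  apply/forallP => x; apply/implyP; rewrite inE => /eqP ->.
  apply/forallP => y; apply/implyP; rewrite inE => /eqP ->.
  by rewrite (eirr Hsimple).
have [u0 hu0] := bigop.eq_bigmax (deg e) hT.
pose x := fun u => (deg e u)%:R : R.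
have hd1 : 1 <= dl by rewrite ler1n.
have hxd : forall u, dl <= x u by move=> u; rewrite ler_nat (mindeg_le e).
have hxD : forall u, x u <= Dl by move=> u; rewrite ler_nat (maxdeg_ge e).
have hD : exists u0, x u0 = Dl by exists u0; rewrite /x /Dl /maxdeg hu0.
have hcS : \sum_(u | u \in S) 1 = b by rewrite sumr_const HSc.
have hcC : \sum_(u | u \notin S) 1 = n - b.
  rewrite (eq_bigl (fun u => u \in ~: S)); last by move=> u; rewrite inE.
  rewrite sumr_const /n /b /nverts -HSc -natrB ?max_card //; congr (_%:R).
  by rewrite -(cardsC S); lia.
have hb : 1 <= b by rewrite ler1n.
have hL1 : \sum_(u | u \in S) x u <= m by rewrite -natr_sum ler_nat (L1 Hsimple HS).
have hL2 : m <= \sum_(u | u \notin S) x u.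
  rewrite (eq_bigl (fun u => u \in ~: S)); last by move=> u; rewrite inE.
  by rewrite -natr_sum ler_nat (L2 Hsimple HS).
have [C1a C1b] := case1 _ _ _ _ _ _ _ _ _ hd1 hxd hxD hD hcS hcC hb hL1 hL2.
have [C2a C2b] := case2 _ _ _ _ _ _ _ _ _ hd1 hxd hxD hD hcS hcC hb hL1 hL2.
have [C3a C3b] := case3 _ _ _ _ _ _ _ _ _ hd1 hxd hxD hD hcS hcC hb hL1 hL2.
have [C4a C4b] := case4 _ _ _ _ _ _ _ _ _ hd1 hxd hxD hD hcS hcC hb hL1 hL2.
have [C5a C5b] := case5 _ _ _ _ _ _ _ _ _ hd1 hxd hxD hD hcS hcC hb hL1 hL2.
have fwd : (forall u, x u = dl) /\ m = b * dl -> regular_balanced_bipartite e.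
  case=> hx hm; apply: (rbb_of Hsimple (k := mindeg e)) => //.
    by move=> u; apply/eqP; rewrite -(eqr_nat R) -/(x u) hx.
  by apply/eqP; rewrite -(eqr_nat R) natrM -/m hm.
have bwd := conv _ _ _ _ _ _ _ _ _ hd1 hxd hxD hD hcS hcC hb hL1 hL2.
have bwd' : regular_balanced_bipartite e ->
    [/\ forall u, x u = dl, Dl = dl, n = 2 * b & m = b * dl].
  move=> H.
  have k0 : (0 < deg e x0)%N := leq_trans Hdelta (mindeg_le e x0).
  have [hk hn hm] := of_rbb Hsimple H k0.
  have [hmin hmax] := reg_minmax x0 hk.
  split.
  - by move=> u; rewrite /x /dl hk hmin.
  - by rewrite /Dl /dl hmax hmin.
  - by rewrite /n /nverts hn natrM.
  - by rewrite /m /b /dl hm natrM hmin.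
have eqs : regular_balanced_bipartite e -> _ := fun H =>
  let: And4 a1 a2 a3 a4 := bwd' H in bwd a1 a2 a3 a4.
split.
- split; first exact: C1a.
  split; first by move=> H; apply: fwd; apply: C1b.
  by move=> H; case: (eqs H).
- split; first exact: C2a.
  split; first by move=> H; apply: fwd; apply: C2b.
  by move=> H; case: (eqs H).
- split; first exact: C3a.
  split; first by move=> H; apply: fwd; apply: C3b.
  by move=> H; case: (eqs H).
- split; first exact: C4a.
  split; first by move=> H; apply: fwd; apply: C4b.
  by move=> H; case: (eqs H).
- split; first exact: C5a.
  split; first by move=> H; apply: fwd; apply: C5b.
  by move=> H; case: (eqs H).
Qed.
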